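(* Define, for $u\geq0$, $$\mathcal{J}_\alpha(u)=\begin{cases}\frac{1}{\alpha(\alpha-1)}\Big(\big(1-\frac{1-\alpha}{4\alpha}u\big)_+^\alpha-1\Big)&\alpha\in(0,\tfrac12),\\[3pt]\frac{1}{\alpha(\alpha-1)}\Big(\big(1-\frac{1-\alpha}{2}u\big)_+^\alpha-1\Big)&\alpha\in[\tfrac12,1),\end{cases}$$ $$\mathcal{J}^\flat_\alpha(u)=\begin{cases}\frac{1}{\alpha(\alpha-1)}\Big[\big(1-\frac{(1-\alpha)^2}{2\alpha}u\big)_+^{\frac{\alpha}{2(1-\alpha)}}-1\Big]&\alpha\in(0,\tfrac12),\\[3pt]\frac{1}{\alpha(\alpha-1)}\Big[\big(1-(1-\alpha)^2u\big)_+^{\frac{\alpha}{2(1-\alpha)}}-1\Big]&\alpha\in[\tfrac12,1),\end{cases}$$ where $(s)_+=\max\{s,0\}$. Then for all $\tfrac12\leq\alpha<1$, $\mathcal{J}^\flat_\alpha(u)\leq\mathcal{J}_\alpha(u)$ for all $u\geq0$; and for all $0<\alpha<\tfrac12$, $\mathcal{J}_\alpha(u)\leq\mathcal{J}^\flat_\alpha(u)$ for all $u\geq0$. *)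

(* Defs.v *)
(* R : realType, real powers via powR (`^),
   with the convention 0 `^ a = 0 for a <> 0. *)
From HB Require Import structures.
From mathcomp Require Import all_boot all_order all_algebra.
From mathcomp Require Import all_classical all_reals all_analysis.
Set Implicit Arguments. Unset Strict Implicit. Unset Printing Implicit Defensive.
Import Order.TTheory GRing.Theory Num.Theory.
Local Open Scope ring_scope.

Definition pospart {R : realType} (s : R) : R := Num.max s 0.

Definition Jalpha {R : realType} (alpha u : R) : R :=
  if alpha < 2^-1 then
    (alpha * (alpha - 1))^-1 *
      (pospart (1 - (1 - alpha) / (4 * alpha) * u) `^ alpha - 1)
  else
    (alpha * (alpha - 1))^-1 *
      (pospart (1 - (1 - alpha) / 2 * u) `^ alpha - 1).

Definition Jflat {R : realType} (alpha u : R) : R :=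
  if alpha < 2^-1 then
    (alpha * (alpha - 1))^-1 *
      (pospart (1 - (1 - alpha) ^+ 2 / (2 * alpha) * u)
         `^ (alpha / (2 * (1 - alpha))) - 1)
  else
    (alpha * (alpha - 1))^-1 *
      (pospart (1 - (1 - alpha) ^+ 2 * u)
         `^ (alpha / (2 * (1 - alpha))) - 1).

(* Main.v *)
Require Import Defs.
From HB Require Import structures.
From mathcomp Require Import all_boot all_order all_algebra.
From mathcomp Require Import all_classical all_reals all_analysis.
From mathcomp Require Import ring lra.
Import Order.TTheory GRing.Theory Num.Theory.
Local Open Scope ring_scope.

Lemma bern_ge (R : realType) (p y : R) : 1 <= p -> 0 <= y ->
  1 + p * (y - 1) <= y `^ p.
Proof.
move=> p1 y0; have [->|p1'] := eqVneq p 1.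
  by rewrite powRr1 // mul1r; lra.
have p1s : 1 < p by rewrite lt_neqAle eq_sym p1' p1.
have p0 : 0 < p by lra.
have q0 : 0 < p / (p - 1) by apply: divr_gt0; lra.
have := @conjugate_powR R y 1 p (p / (p - 1)) y0 ler01 p0 q0.
rewrite powR1 mulr1.
have -> : p^-1 + (p / (p - 1))^-1 = 1.
  by field; apply/andP; split; apply/negP => /eqP; lra.
move=> /(_ erefl) H.
have : p * y <= y `^ p + (p - 1).
  have e : p * (y `^ p / p + 1 / (p / (p - 1))) = y `^ p + (p - 1).
    by field; apply/andP; split; apply/negP => /eqP; lra.
  rewrite -e ler_pM2l //.
lra.
Qed.

Lemma bern_le (R : realType) (p y : R) : 0 < p -> p <= 1 -> 0 <= y ->
  y `^ p <= 1 + p * (y - 1).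
Proof.
move=> p0 p1 y0; have [->|p1'] := eqVneq p 1.
  by rewrite powRr1 // mul1r; lra.
have p1s : p < 1 by rewrite lt_neqAle p1' p1.
have P0 : 0 < p^-1 by rewrite invr_gt0.
have Q0 : 0 < (1 - p)^-1 by rewrite invr_gt0; lra.
have := @conjugate_powR R (y `^ p) 1 p^-1 (1 - p)^-1 (powR_ge0 _ _) ler01 P0 Q0.
rewrite powR1 mulr1 !invrK -powRrM mulfV ?gt_eqF // powRr1 //.
have -> : p + (1 - p) = 1 by ring.
move=> /(_ erefl) H.
have e : y * p + 1 * (1 - p) = 1 + p * (y - 1) by ring.
by rewrite -e.
Qed.

Lemma pospart_le0 (R : realType) (x : R) : x <= 0 -> pospart x = 0.
Proof. by move=> h; rewrite /pospart; apply/max_idPr. Qed.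

Lemma pospart_gt0 (R : realType) (x : R) : 0 < x -> pospart x = x.
Proof. by move=> h; rewrite /pospart; apply/max_idPl; apply: ltW. Qed.

Theorem lemmaB1 (R : realType) :
  (forall alpha : R, 2^-1 <= alpha -> alpha < 1 ->
     forall u : R, 0 <= u -> Jflat alpha u <= Jalpha alpha u) /\
  (forall alpha : R, 0 < alpha -> alpha < 2^-1 ->
     forall u : R, 0 <= u -> Jalpha alpha u <= Jflat alpha u).
Proof.
split.
- move=> a a2 a1 u u0; rewrite /Jflat /Jalpha ltNge a2 /=.
  have a0 : 0 < a by lra.
  have c0 : (a * (a - 1))^-1 <= 0.
    by rewrite invr_le0; apply: ltW; rewrite pmulr_rlt0 //; lra.
  rewrite ler_wnM2l // lerD2r.
  set p := (2 * (1 - a))^-1.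
  have p1 : 1 <= p.
    rewrite /p -[leLHS]invr1 lef_pV2 ?posrE; lra.
  have -> : a / (2 * (1 - a)) = p * a by rewrite /p mulrC.
  rewrite powRrM; apply: ge0_ler_powR; rewrite ?nnegrE ?powR_ge0 //; first lra.
    by rewrite /pospart le_max lexx orbT.
  set B := pospart (1 - (1 - a) ^+ 2 * u).
  have B0 : 0 <= B by rewrite /B /pospart le_max lexx orbT.
  have HB : 1 - (1 - a) ^+ 2 * u <= B by rewrite /B /pospart le_max lexx.
  rewrite /pospart ge_max powR_ge0 andbT.
  apply: le_trans _ (@bern_ge R p B p1 B0).
  have e : (1 - a) / 2 * u = p * ((1 - a) ^+ 2 * u).
    by rewrite /p; field; apply/negP => /eqP; lra.
  rewrite e.
  have : p * (1 - (1 - a) ^+ 2 * u - 1) <= p * (B - 1).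
    by rewrite ler_pM2l; lra.
  lra.
- move=> a a0 a2 u u0; rewrite /Jflat /Jalpha a2.
  have c0 : (a * (a - 1))^-1 <= 0.
    by rewrite invr_le0; apply: ltW; rewrite pmulr_rlt0 //; lra.
  rewrite ler_wnM2l // lerD2r.
  set p := (2 * (1 - a))^-1.
  have p0 : 0 < p by rewrite /p invr_gt0; lra.
  have p1 : p <= 1.
    rewrite /p -[leRHS]invr1 lef_pV2 ?posrE; lra.
  have -> : a / (2 * (1 - a)) = p * a by rewrite /p mulrC.
  rewrite powRrM; apply: ge0_ler_powR; rewrite ?nnegrE ?powR_ge0 //; first lra.
    by rewrite /pospart le_max lexx orbT.
  set A := pospart (1 - (1 - a) / (4 * a) * u).
  have HA : 1 - (1 - a) / (4 * a) * u <= A by rewrite /A /pospart le_max lexx.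
  have A0 : 0 <= A by rewrite /A /pospart le_max lexx orbT.
  case: (leP (1 - (1 - a) ^+ 2 / (2 * a) * u) 0) => hB.
    by rewrite (@pospart_le0 R _ hB) powR0 // gt_eqF.
  rewrite (@pospart_gt0 R _ hB).
  apply: le_trans (@bern_le R p _ p0 p1 (ltW hB)) _.
  have e : (1 - a) / (4 * a) * u = p * ((1 - a) ^+ 2 / (2 * a) * u).
    by rewrite /p; field; apply/andP; split; apply/negP => /eqP; lra.
  move: HA; rewrite e; set X := (1 - a) ^+ 2 / (2 * a) * u.
  have -> : 1 + p * (1 - X - 1) = 1 - p * X by ring.
  by [].
Qed.
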